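(* For all integers $r\ge 3$ and $n_1\ge n_2\ge\dots\ge n_r\ge 2$, $$\iota_0(r-2,n_1,\dots,n_r)=n_1+n_2+\dots+n_r-r+1.$$
   Context: Let $X_\ell=[n_\ell]$ for $1\le\ell\le r$. For $A,B\in X_1\times\dots\times X_r$, write $A\cap B=\{\ell\in[r]:A[\ell]=B[\ell]\}$, where $A[\ell]$ is the $\ell$-th coordinate. A family $\mathcal F\subseteq X_1\times\dots\times X_r$ is $t$-intersecting if $|A\cap B|\ge t$ for all $A,B\in\mathcal F$. Let $\bigcap\mathcal F=\{\ell\in[r]:\text{all members of }\mathcal F\text{ have the same }\ell\text{-th coordinate}\}$. A $t$-intersecting family is non-trivial if $|\bigcap\mathcal F|<t$. For integers $r>t\ge1$ and $n_1\ge\dots\ge n_r\ge 2$, $\iota_0(t,n_1,\dots,n_r)$ denotes the maximum size of a non-trivial $t$-intersecting family $\mathcal F\subseteq X_1\times\dots\times X_r$. *)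

(* Defs.v *)
From mathcomp Require Import all_boot.
Set Implicit Arguments. Unset Strict Implicit. Unset Printing Implicit Defensive.

(* Points of X_1 x ... x X_r with X_l = [n_l], coordinates indexed by 'I_r
   and the l-th coordinate in 'I_(n l) (i.e. {0,...,n_l - 1}, a copy of [n_l]). *)
Notation point r n := {dffun forall i : 'I_r, 'I_(n i)}.

Section Defs.
Variables (r : nat) (n : 'I_r -> nat).

(* A ∩ B = set of coordinates where A and B agree *)
Definition agree (A B : point r n) : {set 'I_r} := [set l | A l == B l].

Definition t_intersecting (t : nat) (F : {set point r n}) : Prop :=
  forall A B, A \in F -> B \in F -> t <= #|agree A B|.

(* ⋂F = coordinates on which all members of F agree *)
Definition bigcapF (F : {set point r n}) : {set 'I_r} :=
  [set l | [forall A in F, forall B in F, A l == B l]].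

Definition nontrivial (t : nat) (F : {set point r n}) : Prop :=
  #|bigcapF F| < t.

Definition is_iota0 (t m : nat) : Prop :=
  (exists F : {set point r n}, [/\ t_intersecting t F, nontrivial t F & #|F| = m]) /\
  (forall F : {set point r n}, t_intersecting t F -> nontrivial t F -> #|F| <= m).
End Defs.

(* Main.v *)
Require Import Defs.
From mathcomp Require Import all_boot zify.
From Stdlib Require Import Classical.
Set Implicit Arguments. Unset Strict Implicit. Unset Printing Implicit Defensive.
Section S.
Variables (r : nat) (n : 'I_r -> nat).
Implicit Types (X Y A B C E : point r n).
Definition upd C m (v : 'I_(n m)) : point r n :=
  [ffun l => @dfwith 'I_r (fun j => 'I_(n j)) (fun j => C j) m v l].
Arguments upd C m v : clear implicits.
Lemma upd_at C m v : upd C m v m = v.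
Proof. by rewrite /upd ffunE dfwith_in. Qed.
Lemma upd_out C m v l : l != m -> upd C m v l = C l.
Proof. by move=> h; rewrite /upd ffunE dfwith_out // eq_sym. Qed.
Lemma sumsub (h : forall i, 0 < n i) : \sum_(i < r) n i = \sum_(i < r) (n i).-1 + r.
Proof.
have E : \sum_(i < r) 1 = r by rewrite sum1_card card_ord.
transitivity (\sum_(i < r) (n i).-1 + \sum_(i < r) 1); last by rewrite E.
rewrite -big_split /=; apply: eq_bigr => i _.
by rewrite addn1 prednK.
Qed.

Definition Lb C m := [set upd C m v | v in [set~ C m]].
Definition Sb C := C |: \bigcup_m Lb C m.

Lemma card_Lb C m : #|Lb C m| = (n m).-1.
Proof.
rewrite card_in_imset ?cardsC1 ?card_ord //.
by move=> u v _ _ /(congr1 (fun X : point r n => X m)); rewrite !upd_at.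
Qed.

Lemma inLb C m X : X \in Lb C m -> X m != C m /\ forall l, l != m -> X l = C l.
Proof.
case/imsetP=> v; rewrite !inE => hv ->; split; first by rewrite upd_at.
by move=> l hl; rewrite upd_out.
Qed.

Lemma card_Sb C : #|Sb C| = 1 + \sum_m (n m).-1.
Proof.
rewrite /Sb cardsU1; congr (_ + _).
  apply/eqP; rewrite eqb1; apply/bigcupP => -[m _ /inLb [] /eqP]; done.
rewrite -sum1_card (partition_disjoint_bigcup addn (fun x => 1)).
  by apply: eq_bigr => m _; rewrite sum1_card card_Lb.
move=> i j hij; rewrite disjoints_subset; apply/subsetP => X /inLb [hi _]; rewrite inE; apply/negP => /inLb [_ hj].

by move: hi; rewrite hj ?eqxx // eq_sym.
Qed.

Definition ballP C X := exists m, forall l, l != m -> X l = C l.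

Lemma ball_Sb C X : ballP C X -> X \in Sb C.
Proof.
case=> m hm; rewrite /Sb in_setU1; case: (eqVneq (X m) (C m)) => hXm.
  apply/orP; left; apply/eqP; apply/ffunP => l.
  by case: (eqVneq l m) => [->|/hm] //.
apply/orP; right; apply/bigcupP; exists m => //.
apply/imsetP; exists (X m); first by rewrite !inE.
apply/ffunP => l; case: (eqVneq l m) => [->|hl]; first by rewrite upd_at.
by rewrite upd_out // hm.
Qed.

Lemma Sb_ball C X (m0 : 'I_r) : X \in Sb C -> ballP C X.
Proof.
rewrite /Sb in_setU1 => /orP [/eqP ->|/bigcupP [m _ /inLb [_ h]]].
  by exists m0.
by exists m.
Qed.

Lemma agree_ball C X Y mX mY : (forall l, l != mX -> X l = C l) ->
  (forall l, l != mY -> Y l = C l) -> r - 2 <= #|agree X Y|.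
Proof.
move=> hX hY.
have sub : ~: [set mX; mY] \subset agree X Y.
  apply/subsetP => l; rewrite !inE negb_or => /andP [h1 h2].
  by rewrite hX // hY.
have := subset_leq_card sub.
have := cardsC [set mX; mY]; rewrite card_ord cards2.
have : nat_of_bool (mX != mY) <= 1 by case: (_ != _).
move: (nat_of_bool _) => b. set c := #|~: _|. set a := #|agree _ _|. lia.
Qed.

Lemma cardsU1_le (T : finType) (x : T) (S : {set T}) : #|x |: S| <= #|S|.+1.
Proof. by rewrite cardsU1; case: (x \notin S). Qed.

Variable F : {set point r n}.
Hypothesis hF : forall X Y, X \in F -> Y \in F -> r - 2 <= #|agree X Y|.

Lemma diff3 X Y p q s : X \in F -> Y \in F -> p != q -> q != s -> p != s ->
  X p != Y p -> X q != Y q -> X s != Y s -> False.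
Proof.
move=> hX hY pq qs ps dp dq ds.
have sub : [set p; q; s] \subset ~: agree X Y.
  by apply/subsetP => l; rewrite !inE => /orP [/orP [] | ] /eqP ->.
have c3 : #|[set p; q; s]| = 3.
  by rewrite -setUA cardsU1 cards2 qs !inE negb_or pq ps.
have := subset_leq_card sub; rewrite c3.
have := cardsC (agree X Y); rewrite card_ord.
have := hF hX hY.
set a := #|agree X Y|; set c := #|~: agree X Y|; lia.
Qed.

Lemma agree_rest X Y p q s : X \in F -> Y \in F -> p != q ->
  X p != Y p -> X q != Y q -> s != p -> s != q -> X s = Y s.
Proof.
move=> hX hY pq dp dq sp sq; case: (eqVneq (X s) (Y s)) => // ds.
by case: (diff3 hX hY pq _ _ dp dq ds); rewrite // eq_sym.
Qed.

Lemma sum_ge (hn : forall m, 2 <= n m) : r <= \sum_m (n m).-1.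
Proof.
have E : \sum_(i < r) 1 = r by rewrite sum1_card card_ord.
rewrite -{1}E; apply: leq_sum => m _; have := hn m; lia.
Qed.

Section Core.
Variables (A B E C : point r n) (i j k : 'I_r).
Hypotheses (hA : A \in F) (hB : B \in F) (hE : E \in F).
Hypotheses (ij : i != j) (jk : j != k) (ik : i != k).
Hypotheses (hAi : A i != C i) (hAo : forall l, l != i -> A l = C l).
Hypotheses (hBj : B j != C j) (hBo : forall l, l != j -> B l = C l).
Hypotheses (hEk : E k != C k) (hEo : forall l, l != k -> E l = C l).

Ltac ds := solve [done | by rewrite eq_sym].

Lemma hout X l : X \in F -> l != i -> l != j -> l != k -> X l != C l -> ballP C X.
Proof.
move=> hX li lj lk hl.
have xi : X i = C i.
  case: (eqVneq (X i) (C i)) => // xi; exfalso.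
  have h1 : X j = B j.
    apply: (agree_rest hX hB (p:=l) (q:=i)); [ds| by rewrite hBo | by rewrite hBo; ds | ds | ds].
  have h2 : X j = E j.
    apply: (agree_rest hX hE (p:=l) (q:=i)); [ds| by rewrite hEo | by rewrite hEo; ds | ds | ds].
  by move: hBj; rewrite -h1 h2 hEo ?eqxx.
have xj : X j = C j.
  case: (eqVneq (X j) (C j)) => // xj; exfalso.
  have h1 : X i = A i.
    apply: (agree_rest hX hA (p:=l) (q:=j)); [ds| by rewrite hAo | by rewrite hAo; ds | ds | ds].
  have h2 : X i = E i.
    apply: (agree_rest hX hE (p:=l) (q:=j)); [ds| by rewrite hEo | by rewrite hEo; ds | ds | ds].
  by move: hAi; rewrite -h1 h2 hEo ?eqxx.
have xk : X k = C k.
  case: (eqVneq (X k) (C k)) => // xk; exfalso.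
  have h1 : X i = A i.
    apply: (agree_rest hX hA (p:=l) (q:=k)); [ds| by rewrite hAo | by rewrite hAo; ds | ds | ds].
  have h2 : X i = B i.
    apply: (agree_rest hX hB (p:=l) (q:=k)); [ds| by rewrite hBo | by rewrite hBo; ds | ds | ds].
  by move: hAi; rewrite -h1 h2 hBo ?eqxx.
exists l => l' hl'.
case: (eqVneq l' i) => [->//|l'i]; case: (eqVneq l' j) => [->//|l'j].
case: (eqVneq l' k) => [->//|l'k].
rewrite -hAo //; apply: (agree_rest hX hA (p:=l) (q:=i)); [ds| by rewrite hAo | by rewrite xi eq_sym | ds | ds].
Qed.

Lemma charT X : X \in F -> ~ ballP C X ->
  [/\ X i = A i, X j = B j, X k = E k &
     forall l, l != i -> l != j -> l != k -> X l = C l].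
Proof.
move=> hX nb.
have rest : forall l, l != i -> l != j -> l != k -> X l = C l.
  move=> l li lj lk; case: (eqVneq (X l) (C l)) => // hl.
  by case: nb; apply: (hout hX li lj lk hl).
have ball1 : forall m, (forall l, l != m -> (l == i) || (l == j) || (l == k) -> X l = C l) -> False.
  move=> m h; apply: nb; exists m => l lm.
  case: (eqVneq l i) => [li|li]; first by apply: h; rewrite // li eqxx.
  case: (eqVneq l j) => [lj|lj]; first by apply: h; rewrite // lj eqxx orbT.
  case: (eqVneq l k) => [lk|lk]; first by apply: h; rewrite // lk eqxx !orbT.
  exact: rest.
have xi : X i != C i.
  apply/negP => /eqP xi.
  case: (eqVneq (X j) (C j)) => xj.
    apply: (ball1 k) => l lk /orP [/orP [] /eqP -> // | /eqP lk'].
    by move: lk; rewrite lk' eqxx.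
  case: (eqVneq (X k) (C k)) => xk.
    apply: (ball1 j) => l lj /orP [/orP [/eqP -> // | /eqP lj'] | /eqP -> //].
    by move: lj; rewrite lj' eqxx.
  have h1 : X i = A i.
    apply: (agree_rest hX hA (p:=j) (q:=k)); [ds| by rewrite hAo; ds | by rewrite hAo; ds | ds | ds].
  by move: hAi; rewrite -h1 xi eqxx.
have xj : X j != C j.
  apply/negP => /eqP xj.
  case: (eqVneq (X k) (C k)) => xk.
    apply: (ball1 i) => l li /orP [/orP [/eqP li' | /eqP -> //] | /eqP -> //].
    by move: li; rewrite li' eqxx.
  have h1 : X j = B j.
    apply: (agree_rest hX hB (p:=i) (q:=k)); [ds| by rewrite hBo; ds | by rewrite hBo; ds | ds | ds].
  by move: hBj; rewrite -h1 xj eqxx.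
have xk : X k = E k.
  apply: (agree_rest hX hE (p:=i) (q:=j)); [ds| by rewrite hEo; ds | by rewrite hEo; ds | ds | ds].
have ek : E k != C k := hEk.
split => //.
- apply: (agree_rest hX hA (p:=j) (q:=k)); [ds| by rewrite hAo; ds | | ds | ds].
  by rewrite xk hAo; ds.
- apply: (agree_rest hX hB (p:=i) (q:=k)); [ds| by rewrite hBo; ds | | ds | ds].
  by rewrite xk hBo; ds.
Qed.


Lemma core_bound (hn : forall m, 2 <= n m) (r3 : 3 <= r) :
  #|F| <= 1 + \sum_m (n m).-1.
Proof.
case: (classic (forall X, X \in F -> ballP C X)) => [hall|].
  rewrite -(card_Sb C); apply: subset_leq_card; apply/subsetP => X hX.
  exact: ball_Sb (hall X hX).
move=> nall; have [X0 hX0n] := not_all_ex_not _ _ nall; have [hX0 nb] := imply_to_and _ _ hX0n.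
have [X0i X0j X0k X0o] := charT hX0 nb.
have sub : F \subset [:: A; B; E; X0].
  apply/subsetP => Y hY; rewrite !inE.
  case: (classic (ballP C Y)) => [[m hm]|nbY].
    case: (eqVneq m i) => [mi|mi].
      subst m; suff -> : Y = A by rewrite eqxx.
      apply/ffunP => l; case: (eqVneq l i) => [->|li]; last by rewrite hm // hAo.
      rewrite -X0i; apply: (agree_rest hY hX0 (p:=j) (q:=k)); [ds | | | ds | ds].
        by rewrite hm ?X0j; ds.
      by rewrite hm ?X0k; ds.
    case: (eqVneq m j) => [mj|mj].
      subst m; suff -> : Y = B by rewrite eqxx orbT.
      apply/ffunP => l; case: (eqVneq l j) => [->|lj]; last by rewrite hm // hBo.
      rewrite -X0j; apply: (agree_rest hY hX0 (p:=i) (q:=k)); [ds | | | ds | ds].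
        by rewrite hm ?X0i; ds.
      by rewrite hm ?X0k; ds.
    case: (eqVneq m k) => [mk|mk].
      subst m; suff -> : Y = E by rewrite eqxx !orbT.
      apply/ffunP => l; case: (eqVneq l k) => [->|lk]; last by rewrite hm // hEo.
      rewrite -X0k; apply: (agree_rest hY hX0 (p:=i) (q:=j)); [ds | | | ds | ds].
        by rewrite hm ?X0i; ds.
      by rewrite hm ?X0j; ds.
    exfalso; apply: (diff3 hY hX0 ij jk ik).
    - by rewrite hm ?X0i; ds.
    - by rewrite hm ?X0j; ds.
    - by rewrite hm ?X0k; ds.
  have [Yi Yj Yk Yo] := charT hY nbY.
  suff -> : Y = X0 by rewrite eqxx !orbT.
  apply/ffunP => l.
  case: (eqVneq l i) => [->|li]; first by rewrite Yi X0i.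
  case: (eqVneq l j) => [->|lj]; first by rewrite Yj X0j.
  case: (eqVneq l k) => [->|lk]; first by rewrite Yk X0k.
  by rewrite Yo ?X0o.
apply: leq_trans (subset_leq_card sub) _; apply: leq_trans (card_size _) _.
apply: (@leq_trans (1 + r)); first by rewrite /=; lia.
by rewrite leq_add2l; exact: sum_ge.
Qed.
End Core.

Lemma core1 A B E i j k (hn : forall m, 2 <= n m) (r3 : 3 <= r) :
  A \in F -> B \in F -> E \in F -> i != j -> j != k -> i != k ->
  B i != A i -> B j != A j -> (forall l, l != i -> l != j -> B l = A l) ->
  E k != A k -> E i = B i -> (forall l, l != k -> l != i -> E l = A l) ->
  #|F| <= 1 + \sum_m (n m).-1.
Proof.
move=> hA hB hE ij jk ik hBi hBj hBo hEk Ei hEo.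
have [C Cv] : exists C : point r n, forall l, C l = if l == k then A l else E l.
  by exists [ffun l => if l == k then A l else E l] => l; rewrite ffunE.
have ki : k != i by rewrite eq_sym.
have kj : k != j by rewrite eq_sym.
have ji : j != i by rewrite eq_sym.
have Ej : E j = A j by apply: hEo.
apply: (@core_bound A B E C i j k hA hB hE ij jk ik _ _ _ _ _ _ hn r3).
- by rewrite Cv (negbTE ik) Ei eq_sym.
- move=> l li; rewrite Cv; case: (eqVneq l k) => // lk; by rewrite hEo.
- by rewrite Cv (negbTE jk) Ej.
- move=> l lj; rewrite Cv; case: (eqVneq l k) => [->|lk]; first by rewrite hBo.
  case: (eqVneq l i) => [->|li]; first by rewrite Ei.
  by rewrite hBo // hEo.
- by rewrite Cv eqxx.
- by move=> l lk; rewrite Cv (negbTE lk).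
Qed.

Lemma upper (hn : forall m, 2 <= n m) (r3 : 3 <= r) (hnt : #|bigcapF F| < r - 2) :
  #|F| <= 1 + \sum_m (n m).-1.
Proof.
have m0 : 'I_r := Ordinal (leq_trans (isT : 0 < 3) r3).
have [A hA] : exists A, A \in F.
  apply/set0Pn; apply/eqP => F0; move: hnt; rewrite F0.
  have -> : bigcapF (set0 : {set point r n}) = setT.
    apply/setP => l; rewrite !inE; apply/forall_inP => X; by rewrite inE.
  rewrite cardsT card_ord; lia.
case: (classic (forall X, X \in F -> ballP A X)) => [hall|nall].
  rewrite -(card_Sb A); apply: subset_leq_card; apply/subsetP => X hX.
  exact: ball_Sb (hall X hX).
have [B hBn] := not_all_ex_not _ _ nall; have [hB nbB] := imply_to_and _ _ hBn.
have [i [_ hBi]] : exists i, i != m0 /\ B i != A i.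
  apply: NNPP => h; apply: nbB; exists m0 => l hl.
  case: (eqVneq (B l) (A l)) => // hne; exfalso; apply: h; by exists l.
have [j [ji hBj]] : exists j, j != i /\ B j != A j.
  apply: NNPP => h; apply: nbB; exists i => l hl.
  case: (eqVneq (B l) (A l)) => // hne; exfalso; apply: h; by exists l.
have ij : i != j by rewrite eq_sym.
have hBo : forall l, l != i -> l != j -> B l = A l.
  by move=> l li lj; apply: (agree_rest hB hA (p:=i) (q:=j)).
have [k [ki [kj [E [hE hEk]]]]] :
    exists k, k != i /\ k != j /\ exists E, E \in F /\ E k != A k.
  apply: NNPP => h.
  have sub : ~: [set i; j] \subset bigcapF F.
    apply/subsetP => l; rewrite !inE negb_or => /andP [li lj].
    have e : forall X, X \in F -> X l = A l.
      move=> X hX; case: (eqVneq (X l) (A l)) => // hne; exfalso; apply: h.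
      by exists l; split => //; split => //; exists X.
    apply/forall_inP => X hX; apply/forall_inP => Y hY.
    by rewrite e // e.
  have := subset_leq_card sub; have := cardsC [set i; j].
  rewrite card_ord cards2 ij; move: hnt.
  set a := #|bigcapF F|; set c := #|~: _|; move=> /=; lia.
have hEB : E k != B k by rewrite hBo.
have ik : i != k by rewrite eq_sym.
have jk : j != k by rewrite eq_sym.
case: (eqVneq (E i) (A i)) => [Ei|Ei].
  case: (eqVneq (E j) (A j)) => [Ej|Ej].
    exfalso; apply: (diff3 hE hB ij jk ik).
    - by rewrite Ei eq_sym.
    - by rewrite Ej eq_sym.
    - exact: hEB.
  have hEo : forall l, l != k -> l != j -> E l = A l.
    by move=> l lk lj; apply: (agree_rest hE hA (p:=k) (q:=j)).
  have EjB : E j = B j.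
    apply: (agree_rest hE hB (p:=k) (q:=i)) => //; by rewrite Ei eq_sym.
  apply: (core1 (i:=j) (j:=i) (k:=k) hn r3 hA hB hE) => //.
  by move=> l lj li; apply: hBo.
have hEo : forall l, l != k -> l != i -> E l = A l.
  by move=> l lk li; apply: (agree_rest hE hA (p:=k) (q:=i)).
have EiB : E i = B i.
  apply: (agree_rest hE hB (p:=k) (q:=j)) => //; by rewrite hEo // eq_sym.
exact: (core1 (i:=i) (j:=j) (k:=k) hn r3 hA hB hE).
Qed.
End S.

Theorem theorem1p4 (r : nat) (n : 'I_r -> nat) :
  3 <= r ->
  (forall i j : 'I_r, i <= j -> n j <= n i) ->
  (forall i : 'I_r, 2 <= n i) ->
  is_iota0 n (r - 2) ((\sum_(i < r) n i) - r + 1).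
Proof.
move=> r3 _ hn.
have m0 : 'I_r := Ordinal (leq_trans (isT : 0 < 3) r3).
have hsum : (\sum_(i < r) n i) - r + 1 = 1 + \sum_m (n m).-1.
  by rewrite (sumsub (fun i => ltnW (hn i))) addnK addnC.
rewrite hsum; split; last first.
  by move=> F hF hnt; apply: upper.
have [C0 _] : exists C0 : point r n, True.
  by exists [ffun l => Ordinal (ltnW (hn l))].
exists (Sb C0); split.
- move=> X Y hX hY.
  have [mX hmX] := Sb_ball m0 hX; have [mY hmY] := Sb_ball m0 hY.
  exact: agree_ball hmX hmY.
- rewrite /nontrivial.
  have -> : bigcapF (Sb C0) = set0.
    apply/setP => l; rewrite !inE; apply/negP => /forall_inP h.
    have : 0 < #|[set~ C0 l]| by rewrite cardsC1 card_ord; have := hn l; lia.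
    case/card_gt0P => v; rewrite !inE => hv.
    have hC : C0 \in Sb C0 by rewrite /Sb setU11.
    have hU : @upd r n C0 l v \in Sb C0.
      by apply: ball_Sb; exists l => l' hl'; rewrite upd_out.
    move: (h C0 hC) => /forall_inP /(_ _ hU) /eqP; rewrite upd_at => e.
    by move: hv; rewrite e eqxx.
  rewrite cards0; lia.
- exact: card_Sb.
Qed.
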